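(* Let $X$ be a finite poset and $F$ a field with $\mathrm{char}(F)=2$ and $|F|>2$. Then every bijective $F$-linear map $\varphi:I(X,F)\to I(X,F)$ satisfying $\varphi(E(I(X,F)))\subseteq E(I(X,F))$ is a Lie automorphism of $I(X,F)$, i.e. $\varphi(ab+ba)=\varphi(a)\varphi(b)+\varphi(b)\varphi(a)$ for all $a,b\in I(X,F)$.
   Context: For a locally finite poset $X$ and a field $F$, $I(X,F)$ is the incidence algebra: functions $f:X\times X\to F$ with $f(x,y)=0$ unless $x\le y$, with convolution product $(fg)(x,y)=\sum_{x\le z\le y}f(x,z)g(z,y)$. $E(A)$ denotes the set of idempotents of a ring $A$. In characteristic $2$, a Lie automorphism of an algebra $A$ means a bijective linear map $A\to A$ preserving the product $a\circ b=ab+ba$ (which coincides with $ab-ba$). *)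

(* Defs.v *)
From HB Require Import structures.
From mathcomp Require Import all_boot all_order all_algebra.
Set Implicit Arguments. Unset Strict Implicit. Unset Printing Implicit Defensive.
Import Order.TTheory GRing.Theory.
Local Open Scope ring_scope.

(* Incidence algebra I(X,F) of a finite poset X over a field F, represented
   inside the space of all functions X * X -> F (finite functions). *)

Definition incid {d : Order.disp_t} {X : finPOrderType d} {F : fieldType}
  (f : {ffun X * X -> F}) : Prop :=
  forall x y : X, ~~ (x <= y)%O -> f (x, y) = 0.

Definition iconv {d : Order.disp_t} {X : finPOrderType d} {F : fieldType}
  (f g : {ffun X * X -> F}) : {ffun X * X -> F} :=
  [ffun p => \sum_(z : X | (p.1 <= z)%O && (z <= p.2)%O) f (p.1, z) * g (z, p.2)].

Definition iidem {d : Order.disp_t} {X : finPOrderType d} {F : fieldType}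
  (e : {ffun X * X -> F}) : Prop :=
  incid e /\ iconv e e = e.

Definition iscale {d : Order.disp_t} {X : finPOrderType d} {F : fieldType}
  (k : F) (f : {ffun X * X -> F}) : {ffun X * X -> F} :=
  [ffun p => k * f p].

(* Main.v *)
Require Import Defs.
From HB Require Import structures.
From mathcomp Require Import all_boot all_order all_algebra.
From mathcomp Require Import ring.
Import Order.TTheory GRing.Theory.
Local Open Scope ring_scope.
Set Implicit Arguments. Unset Strict Implicit.

Definition jor {d : Order.disp_t} {X : finPOrderType d} {F : fieldType}
  (a b : {ffun X * X -> F}) := iconv a b + iconv b a.

Lemma iconvDl d (X : finPOrderType d) (F : fieldType) (a b c : {ffun X * X -> F}) :
  iconv (a + b) c = iconv a c + iconv b c.
Proof. apply/ffunP=> p; rewrite !ffunE -big_split /=; apply: eq_bigr=> z _; by rewrite !ffunE mulrDl. Qed.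

Lemma iconvDr d (X : finPOrderType d) (F : fieldType) (a b c : {ffun X * X -> F}) :
  iconv c (a + b) = iconv c a + iconv c b.
Proof. apply/ffunP=> p; rewrite !ffunE -big_split /=; apply: eq_bigr=> z _; by rewrite !ffunE mulrDr. Qed.

Lemma iconvZl d (X : finPOrderType d) (F : fieldType) k (a c : {ffun X * X -> F}) :
  iconv (iscale k a) c = iscale k (iconv a c).
Proof. apply/ffunP=> p; rewrite !ffunE big_distrr /=; apply: eq_bigr=> z _; by rewrite !ffunE mulrA. Qed.

Lemma iconvZr d (X : finPOrderType d) (F : fieldType) k (a c : {ffun X * X -> F}) :
  iconv c (iscale k a) = iscale k (iconv c a).
Proof. apply/ffunP=> p; rewrite !ffunE big_distrr /=; apply: eq_bigr=> z _; rewrite !ffunE; ring. Qed.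

Lemma iconv0l d (X : finPOrderType d) (F : fieldType) (a : {ffun X * X -> F}) :
  iconv 0 a = 0.
Proof. apply/ffunP=> p; rewrite !ffunE big1 // => z _; by rewrite !ffunE mul0r. Qed.

Lemma iconv0r d (X : finPOrderType d) (F : fieldType) (a : {ffun X * X -> F}) :
  iconv a 0 = 0.
Proof. apply/ffunP=> p; rewrite !ffunE big1 // => z _; by rewrite !ffunE mulr0. Qed.

Definition U {d : Order.disp_t} {X : finPOrderType d} {F : fieldType} (x y : X) :
  {ffun X * X -> F} := [ffun p => if p == (x, y) then 1 else 0].

Lemma Uprod d (X : finPOrderType d) (F : fieldType) (x y u v : X) :
  iconv (U x y) (U u v) = if [&& y == u, (x <= y)%O & (y <= v)%O] then U x v else 0 :> {ffun X * X -> F}.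
Proof.
apply/ffunP=> [[a b]]; rewrite !ffunE /=.
case: (boolP ((a <= y)%O && (y <= b)%O)) => Hy.
  rewrite (bigD1 y) //= big1 ?addr0; last first.
    move=> z /andP[_ nz]; rewrite !ffunE !xpair_eqE (negPf nz) andbF mul0r //.
  rewrite !ffunE !xpair_eqE eqxx andbT.
  case/andP: Hy => ay yb.
  case: (y =P u) => [eyu|yu]; last first.
    by rewrite /= mulr0 ffunE.
  subst u; case: (a =P x) => [ea|ax] /=; last first.
    by rewrite mul0r; case: ifP => _; rewrite !ffunE // xpair_eqE (introF eqP ax).
  subst a; case: (b =P v) => [eb|bv] /=.
    by subst b; rewrite ay yb ffunE eqxx mul1r.
  by rewrite mulr0; case: ifP => _; rewrite !ffunE // xpair_eqE (introF eqP bv) andbF.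
rewrite big1; last first.
  move=> z zr; rewrite !ffunE !xpair_eqE; have [zy|zy] := eqVneq z y.
    by subst z; rewrite zr in Hy.
  by rewrite andbF mul0r.
case: (y =P u) => [eyu|yu]; last by rewrite ffunE.
subst u; rewrite /=.
case: ifP => h; rewrite !ffunE ?xpair_eqE //.
have [ax|ax] := eqVneq a x => //=; have [bv|bv] := eqVneq b v => //=.
subst; by rewrite h in Hy.
Qed.


Lemma addfE d (X : finPOrderType d) (F : fieldType) (f g : {ffun X * X -> F}) p :
  (f + g) p = f p + g p.
Proof. by rewrite ffunE. Qed.

Definition G {d : Order.disp_t} {X : finPOrderType d} {F : fieldType}
  (E A B C : {ffun X * X -> F}) (s t : F) :=
  E + iscale s A + iscale t B + iscale (s * t) C.

Lemma expandG d (X : finPOrderType d) (F : fieldType) (E A B C : {ffun X * X -> F}) s t :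
  iconv (G E A B C s t) (G E A B C s t) =
  iconv E E + iscale s (jor E A) + iscale t (jor E B) + iscale (s*t) (jor E C + jor A B)
  + iscale (s^+2) (iconv A A) + iscale (t^+2) (iconv B B) + iscale (s^+2*t^+2) (iconv C C)
  + iscale (s^+2*t) (jor A C) + iscale (s*t^+2) (jor B C).
Proof.
rewrite /G /jor !iconvDl !iconvDr !iconvZl !iconvZr.
move: (iconv E E) (iconv E A) (iconv A E) (iconv E B) (iconv B E) (iconv E C) (iconv C E)
  (iconv A A) (iconv A B) (iconv B A) (iconv A C) (iconv C A) (iconv B B) (iconv B C) (iconv C B) (iconv C C).
move=> ee ea ae eb be ec ce aa ab ba ac ca bb bc cb cc.
apply/ffunP=> p; rewrite !ffunE; ring.
Qed.

Lemma solve8 (F : fieldType) (c u1 u2 u3 qa qb qc r1 r2 : F) : c != 0 -> c != 1 ->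
  (forall s t, s*u1 + t*u2 + s*t*u3 + s^+2*qa + t^+2*qb + s^+2*t^+2*qc + s^+2*t*r1 + s*t^+2*r2 = 0) ->
  [/\ u1 = 0, u2 = 0, u3 = 0, qa = 0 & qb = 0] /\ [/\ qc = 0, r1 = 0 & r2 = 0].
Proof.
move=> c0 c1.
pose P s t := s*u1 + t*u2 + s*t*u3 + s^+2*qa + t^+2*qb + s^+2*t^+2*qc + s^+2*t*r1 + s*t^+2*r2.
move=> H0; have H : forall s t, P s t = 0 := H0.
have c1' : c - 1 != 0 by rewrite subr_eq0.
have cc : c * (c - 1) != 0 by rewrite mulf_neq0.
have cc2 : c^+2 * (c - 1)^+2 != 0 by rewrite mulf_neq0 // expf_neq0.
have hqa : qa = 0.
  have : c * (c - 1) * qa = P c 0 - c * P 1 0 by rewrite /P; ring.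
  by rewrite !H mulr0 subrr => /eqP; rewrite mulf_eq0 (negPf cc) /= => /eqP.
have hu1 : u1 = 0.
  have : u1 = P 1 0 - qa by rewrite /P; ring.
  by rewrite H hqa subrr.
have hqb : qb = 0.
  have : c * (c - 1) * qb = P 0 c - c * P 0 1 by rewrite /P; ring.
  by rewrite !H mulr0 subrr => /eqP; rewrite mulf_eq0 (negPf cc) /= => /eqP.
have hu2 : u2 = 0.
  have : u2 = P 0 1 - qb by rewrite /P; ring.
  by rewrite H hqb subrr.
have hw1 : qc + r1 = 0.
  have : c * (c - 1) * (qc + r1) = P c 1 - c * P 1 1 - u2 * (1 - c) - qa * (c^+2 - c) - qb * (1 - c).
    by rewrite /P; ring.
  rewrite !H hu2 hqa hqb !mul0r mulr0 !subrr => /eqP; rewrite mulf_eq0 (negPf cc) /= => /eqP.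
  done.
have hw2 : qc + r2 = 0.
  have : c * (c - 1) * (qc + r2) = P 1 c - c * P 1 1 - u1 * (1 - c) - qb * (c^+2 - c) - qa * (1 - c).
    by rewrite /P; ring.
  rewrite !H hu1 hqa hqb !mul0r mulr0 !subrr => /eqP; rewrite mulf_eq0 (negPf cc) /= => /eqP.
  done.
have hw3 : u3 - qc = 0.
  have : u3 - qc = P 1 1 - u1 - u2 - qa - qb - (qc + r1) - (qc + r2) by rewrite /P; ring.
  by rewrite H hu1 hu2 hqa hqb hw1 hw2 !subr0.
have hqc : qc = 0.
  have : c^+2 * (c - 1)^+2 * qc = P c c - c * u1 - c * u2 - c^+2 * qa - c^+2 * qb - c^+2 * (u3 - qc)
     - c^+3 * (qc + r1) - c^+3 * (qc + r2) by rewrite /P; ring.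
  rewrite H hu1 hu2 hqa hqb hw1 hw2 hw3 !mulr0 !subr0 => /eqP.
  by rewrite mulf_eq0 (negPf cc2) /= => /eqP.
split; split => //.
- by move/eqP: hw3; rewrite hqc subr0 => /eqP.
- by move: hw1; rewrite hqc add0r.
- by move: hw2; rewrite hqc add0r.
Qed.

Definition Fam {d : Order.disp_t} {X : finPOrderType d} {F : fieldType}
  (E A B C : {ffun X * X -> F}) : Prop :=
  [/\ jor E A = A, jor E B = B, jor E C + jor A B = C, iconv A A = 0 & iconv B B = 0]
  /\ [/\ iconv C C = 0, jor A C = 0 & jor B C = 0].

Lemma Fam_suff d (X : finPOrderType d) (F : fieldType) (E A B C : {ffun X * X -> F}) :
  iconv E E = E -> Fam E A B C -> forall s t, iconv (G E A B C s t) (G E A B C s t) = G E A B C s t.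
Proof.
move=> hE [[h1 h2 h3 h4 h5] [h6 h7 h8]] s t.
rewrite expandG hE h1 h2 h3 h4 h5 h6 h7 h8 /G.
apply/ffunP=> p; rewrite !ffunE; ring.
Qed.

Lemma Fam_nec d (X : finPOrderType d) (F : fieldType) (E A B C : {ffun X * X -> F}) (c : F) :
  c != 0 -> c != 1 ->
  iconv E E = E -> (forall s t, iconv (G E A B C s t) (G E A B C s t) = G E A B C s t) -> Fam E A B C.
Proof.
move=> c0 c1 hE H.
have key : forall p, 
  [/\ jor E A p - A p = 0, jor E B p - B p = 0, jor E C p + jor A B p - C p = 0,
      iconv A A p = 0 & iconv B B p = 0] /\ [/\ iconv C C p = 0, jor A C p = 0 & jor B C p = 0].
  move=> p; apply: (solve8 c0 c1) => s t.
  have h := H s t; rewrite expandG hE /G in h; move: h.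
  move: (jor E A) (jor E B) (jor E C) (jor A B) (jor A C) (jor B C) (iconv A A) (iconv B B) (iconv C C).
  move=> ea eb ec ab ac bc aa bb cc h.
  move/ffunP/(_ p): h; rewrite !ffunE => h.
  move/eqP: h; rewrite -subr_eq0 => /eqP h; rewrite -h; ring.

split; split; apply/ffunP=> p; have [[k1 k2 k3 k4 k5] [k6 k7 k8]] := key p.
- by apply/eqP; rewrite -subr_eq0 k1.
- by apply/eqP; rewrite -subr_eq0 k2.
- by apply/eqP; rewrite addfE -subr_eq0 k3.
- by rewrite k4 ffunE.
- by rewrite k5 ffunE.
- by rewrite k6 ffunE.
- by rewrite k7 ffunE.
- by rewrite k8 ffunE.
Qed.

Lemma incidU d (X : finPOrderType d) (F : fieldType) (x y : X) : (x <= y)%O -> incid (U x y : {ffun X * X -> F}).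
Proof.
move=> xy a b ab; rewrite ffunE; case: eqP => // [[ea eb]]; subst; by rewrite xy in ab.
Qed.

Ltac ufacts := rewrite /jor ?iconvDl ?iconvDr ?iconv0l ?iconv0r ?Uprod /=.

Lemma sqUU d (X : finPOrderType d) (F : fieldType) (x : X) :
  iconv (U x x) (U x x) = (U x x : {ffun X * X -> F}).
Proof. by rewrite Uprod eqxx lexx. Qed.

Lemma sqUU2 d (X : finPOrderType d) (F : fieldType) (x u : X) : x != u ->
  iconv (U x x + U u u) (U x x + U u u) = (U x x + U u u : {ffun X * X -> F}).
Proof.
move=> xu; have ux : u != x by rewrite eq_sym.
by ufacts; rewrite !eqxx !lexx (negPf xu) (negPf ux) /= addr0 add0r.
Qed.

Lemma F1 d (X : finPOrderType d) (F : fieldType) (u v : X) : (u < v)%O ->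
  Fam (U u u) (U u v) 0 (0 : {ffun X * X -> F}).
Proof.
rewrite lt_neqAle => /andP[uv le]; have vu : v != u by rewrite eq_sym.
split; split; ufacts; rewrite ?eqxx ?lexx ?le ?(negPf uv) ?(negPf vu) /= ?addr0 ?add0r //.
Qed.

Ltac ltf h := let a := fresh "ne" in let b := fresh "le" in let e := fresh "ne" in
  move: (h); rewrite lt_neqAle => /andP[a b]; have e := a; rewrite eq_sym in e.

Ltac famtac := split; split; ufacts;
  repeat match goal with H : is_true (_ != _) |- _ => rewrite ?(negPf H); clear H end;
  repeat match goal with H : is_true (_ <= _)%O |- _ => rewrite ?H; clear H end;
  rewrite ?eqxx ?lexx /= ?addr0 ?add0r //.

Lemma F2 d (X : finPOrderType d) (F : fieldType) (u v : X) : (u < v)%O ->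
  Fam (U v v) (U u v) 0 (0 : {ffun X * X -> F}).
Proof. move=> h; ltf h; famtac. Qed.

Lemma F3 d (X : finPOrderType d) (F : fieldType) (z u v : X) : (u < v)%O -> z != u -> z != v ->
  Fam (U z z + U u u) (U u v) 0 (0 : {ffun X * X -> F}).
Proof.
move=> h zu zv; ltf h; have uz : u != z by rewrite eq_sym.
have vz : v != z by rewrite eq_sym. famtac.
Qed.

Lemma F4 d (X : finPOrderType d) (F : fieldType) (x y v : X) : (x < y)%O -> (y < v)%O ->
  Fam (U y y) (U x y) (U y v) (U x v : {ffun X * X -> F}).
Proof.
move=> h1 h2; have h3 := lt_trans h1 h2; ltf h1; ltf h2; ltf h3; famtac.
Qed.

Lemma F5 d (X : finPOrderType d) (F : fieldType) (x y v : X) : (x < y)%O -> (x < v)%O -> y != v ->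
  Fam (U x x) (U x y) (U x v) (0 : {ffun X * X -> F}).
Proof.
move=> h1 h2 yv; have vy : v != y by rewrite eq_sym. ltf h1; ltf h2; famtac.
Qed.

Lemma F6 d (X : finPOrderType d) (F : fieldType) (x u y : X) : (x < y)%O -> (u < y)%O -> x != u ->
  Fam (U y y) (U x y) (U u y) (0 : {ffun X * X -> F}).
Proof.
move=> h1 h2 xu; have ux : u != x by rewrite eq_sym. ltf h1; ltf h2; famtac.
Qed.

Lemma F7 d (X : finPOrderType d) (F : fieldType) (x y u v : X) : (x < y)%O -> (u < v)%O ->
  x != u -> y != u -> v != x ->
  Fam (U x x + U u u) (U x y) (U u v) (0 : {ffun X * X -> F}).
Proof.
move=> h1 h2 xu yu vx; have ux : u != x by rewrite eq_sym.
have uy : u != y by rewrite eq_sym. have xv : x != v by rewrite eq_sym.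
ltf h1; ltf h2; famtac.
Qed.

Section PhiPart.
Variables (d : Order.disp_t) (X : finPOrderType d) (F : fieldType).
Local Notation V := {ffun X * X -> F}.
Variable (charF2 : 2%N \in [pchar F]).
Variables (c : F) (c0 : c != 0) (c1 : c != 1).
Variable phi : V -> V.
Hypothesis phi_maps : forall a, incid a -> incid (phi a).
Hypothesis phi_lin : forall (k : F) (a b : V), incid a -> incid b ->
               phi (iscale k a + b) = iscale k (phi a) + phi b.
Hypothesis phi_idem : forall e, iidem e -> iidem (phi e).

Lemma two0 : (2 : F) = 0.
Proof. by move: charF2; rewrite inE => /andP[_ /eqP]. Qed.

Lemma addvv (f : V) : f + f = 0.
Proof. by apply/ffunP=> p; rewrite !ffunE -mulr2n -mulr_natl two0 mul0r. Qed.

Lemma oppvE (f : V) : - f = f.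
Proof. by apply/eqP; rewrite eq_sym -subr_eq0 opprK addvv. Qed.

Lemma char2_solve (x y z : V) : x + y = z -> y = z + x.
Proof. by move=> <-; rewrite addrC addrA addvv add0r. Qed.

Lemma incid0 : incid (0 : V).
Proof. by move=> x y _; rewrite ffunE. Qed.

Lemma incidD (a b : V) : incid a -> incid b -> incid (a + b).
Proof. by move=> ha hb x y n; rewrite ffunE ha ?hb ?addr0. Qed.

Lemma incidZ k (a : V) : incid a -> incid (iscale k a).
Proof. by move=> ha x y n; rewrite ffunE ha ?mulr0. Qed.

Lemma incidC (a b : V) : incid a -> incid b -> incid (iconv a b).
Proof.
move=> ha hb x y n; rewrite ffunE /= big1 // => z /andP[xz zy].
by move: n; rewrite (le_trans xz zy).
Qed.

Lemma incidJ (a b : V) : incid a -> incid b -> incid (jor a b).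
Proof. by move=> ha hb; apply: incidD; apply: incidC. Qed.

Lemma iscale1 (a : V) : iscale 1 a = a.
Proof. by apply/ffunP=> p; rewrite ffunE mul1r. Qed.

Lemma phi0 : phi 0 = 0.
Proof.
have := phi_lin 1 incid0 incid0; rewrite addr0 iscale1 iscale1 => h.
by apply: (addrI (phi 0)); rewrite addr0 -h.
Qed.

Lemma phiD (a b : V) : incid a -> incid b -> phi (a + b) = phi a + phi b.
Proof. by move=> ha hb; have := phi_lin 1 ha hb; rewrite !iscale1. Qed.

Lemma phiZ k (a : V) : incid a -> phi (iscale k a) = iscale k (phi a).
Proof. by move=> ha; have := phi_lin k ha incid0; rewrite !addr0 phi0 addr0. Qed.

Definition J (a b : V) := phi (jor a b) = jor (phi a) (phi b).

Lemma jorC (a b : V) : jor a b = jor b a.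
Proof. by rewrite /jor addrC. Qed.

Lemma J_sym a b : J a b -> J b a.
Proof. by rewrite /J jorC => ->; rewrite jorC. Qed.

Lemma jor_self (a : V) : jor a a = 0.
Proof. exact: addvv. Qed.

Lemma J_self a : J a a.
Proof. by rewrite /J !jor_self phi0. Qed.

Lemma jorDl (a b e : V) : jor (a + b) e = jor a e + jor b e.
Proof. rewrite /jor iconvDl iconvDr; apply/ffunP=> p; rewrite !ffunE; ring. Qed.

Lemma jorZl k (a e : V) : jor (iscale k a) e = iscale k (jor a e).
Proof. rewrite /jor iconvZl iconvZr; apply/ffunP=> p; rewrite !ffunE; ring. Qed.

Lemma J_add a b e : incid a -> incid b -> incid e -> J a e -> J b e -> J (a + b) e.
Proof.
move=> ha hb he h1 h2; rewrite /J jorDl phiD; try exact: incidJ.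
by rewrite h1 h2 phiD // jorDl.
Qed.

Lemma J_scale k a e : incid a -> incid e -> J a e -> J (iscale k a) e.
Proof.
move=> ha he h; rewrite /J jorZl phiZ; last exact: incidJ.
by rewrite h phiZ // jorZl.
Qed.

Lemma J_sub a b e : incid a -> incid b -> incid e -> J (a + b) e -> J b e -> J a e.
Proof.
move=> ha hb he h1 h2.
have -> : a = (a + b) + b by rewrite -addrA addvv addr0.
by apply: J_add => //; apply: incidD.
Qed.

Lemma sqD (a b : V) : iconv (a + b) (a + b) = iconv a a + iconv b b + jor a b.
Proof. rewrite /jor !iconvDl !iconvDr; apply/ffunP=> p; rewrite !ffunE; ring. Qed.

Lemma L0 e f : iidem e -> iidem f -> iidem (e + f) -> J e f.
Proof.
have key : forall e f : V, iconv e e = e -> iconv f f = f -> iconv (e+f) (e+f) = e + f -> jor e f = 0.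
  move=> e' f' h1 h2; rewrite sqD h1 h2 => /eqP; rewrite -{2}[e' + f']addr0.
  by rewrite (inj_eq (addrI _)) => /eqP.
move=> he hf hef; have [ie ee] := he; have [i_f ff] := hf; have [_ eef] := hef.
have [_ pe] := phi_idem he; have [_ pf] := phi_idem hf; have [_ pef] := phi_idem hef.
rewrite phiD // in pef.
by rewrite /J key // phi0 key.
Qed.

Lemma phiG E A B C s t : incid E -> incid A -> incid B -> incid C ->
  phi (G E A B C s t) = G (phi E) (phi A) (phi B) (phi C) s t.
Proof.
move=> hE hA hB hC; rewrite /G.
rewrite !phiD ?phiZ //; by repeat apply: incidD || apply: incidZ.
Qed.

Lemma LFam E A B C : incid E -> incid A -> incid B -> incid C -> iidem E ->
  Fam E A B C -> J E C -> J E A /\ J A B.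
Proof.
move=> hE hA hB hC iE fam hEC.
have [_ pE] := phi_idem iE.
have fam' : Fam (phi E) (phi A) (phi B) (phi C).
  apply: (Fam_nec c0 c1 pE) => s t.
  rewrite -phiG //.
  have : iidem (G E A B C s t).
    split; last by apply: Fam_suff => //; case: iE.
    rewrite /G; by repeat apply: incidD || apply: incidZ.
  by move/phi_idem => [].
have [[f1 f2 f3 f4 f5] _] := fam; have [[g1 g2 g3 g4 g5] _] := fam'.
split; first by rewrite /J f1 g1.
rewrite /J (char2_solve f3) phiD //; last exact: incidJ.
by rewrite hEC (char2_solve g3).
Qed.

Lemma J0r a : J a 0.
Proof. by rewrite /J /jor !iconv0l !iconv0r addr0 phi0 !iconv0l !iconv0r addr0. Qed.

Lemma iU (x y : X) : (x <= y)%O -> incid (U x y : V).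
Proof. exact: incidU. Qed.

Lemma iidemU (x : X) : iidem (U x x : V).
Proof. by split; [apply: incidU; rewrite lexx | apply: sqUU]. Qed.

Lemma JUdiag (x u : X) : J (U x x) (U u u).
Proof.
have [<-|xu] := eqVneq x u; first exact: J_self.
apply: L0; try exact: iidemU.
split; last exact: sqUU2.
by apply: incidD; apply: incidU; rewrite lexx.
Qed.

Lemma JUdo (z u v : X) : (u < v)%O -> J (U z z) (U u v).
Proof.
move=> uv; have uv' := ltW uv.
have iu : forall x : X, incid (U x x : V) by move=> x; apply: incidU; rewrite lexx.
have [ezu|zu] := eqVneq z u.
  subst z; by case: (LFam (iu _) (iU uv') incid0 incid0 (iidemU u) (F1 _ uv) (J0r _)).
have [ezv|zv] := eqVneq z v.
  subst z; by case: (LFam (iu _) (iU uv') incid0 incid0 (iidemU v) (F2 _ uv) (J0r _)).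
have h1 : J (U z z + U u u) (U u v).
  have ie : iidem (U z z + U u u : V).
    by split; [apply: incidD | apply: sqUU2].
  have [i1 _] := ie.
  by case: (LFam i1 (iU uv') incid0 incid0 ie (F3 _ uv zu zv) (J0r _)).
have h2 : J (U u u) (U u v).
  by case: (LFam (iu _) (iU uv') incid0 incid0 (iidemU u) (F1 _ uv) (J0r _)).
apply: (J_sub _ _ _ h1 h2) => //; exact: incidU.
Qed.

Lemma JUoo (x y u v : X) : (x < y)%O -> (u < v)%O -> J (U x y) (U u v).
Proof.
have iu : forall x : X, incid (U x x : V) by move=> w; apply: incidU; rewrite lexx.
have main : forall x y u v : X, (x < y)%O -> (u < v)%O -> y == u -> J (U x y) (U u v).
  move=> x' y' u' v' xy uv /eqP eyu; subst u'.
  have xv := lt_trans xy uv.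
  have hEC : J (U y' y') (U x' v').
    by apply: JUdo.
  by case: (LFam (iu _) (iU (ltW xy)) (iU (ltW uv)) (iU (ltW xv))
         (iidemU y') (F4 _ xy uv) hEC).
move=> xy uv.
have [eyu|yu] := eqVneq y u; first by apply: main => //; rewrite eyu.
have [evx|vx] := eqVneq v x; first by apply: J_sym; apply: main => //; rewrite evx.
have [exu|xu] := eqVneq x u.
  subst u; have [eyv|yv] := eqVneq y v; first by subst; apply: J_self.
  by case: (LFam (iu _) (iU (ltW xy)) (iU (ltW uv)) incid0
         (iidemU x) (F5 _ xy uv yv) (J0r _)).
have [eyv|yv] := eqVneq y v.
  subst v.
  by case: (LFam (iu _) (iU (ltW xy)) (iU (ltW uv)) incid0
         (iidemU y) (F6 _ xy uv xu) (J0r _)).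
have ie : iidem (U x x + U u u : V) by split; [apply: incidD | apply: sqUU2].
have [i1 _] := ie.
by case: (LFam i1 (iU (ltW xy)) (iU (ltW uv)) incid0
         ie (F7 _ xy uv xu yu vx) (J0r _)).
Qed.

Lemma JU (x y u v : X) : (x <= y)%O -> (u <= v)%O -> J (U x y) (U u v).
Proof.
rewrite !le_eqVlt => /orP[/eqP<-|xy] /orP[/eqP<-|uv].
- exact: JUdiag.
- exact: JUdo.
- by apply: J_sym; apply: JUdo.
- exact: JUoo.
Qed.

Lemma decomp (a : V) : incid a -> a = \sum_(p | (p.1 <= p.2)%O) iscale (a p) (U p.1 p.2).
Proof.
move=> ha; apply/ffunP=> q; rewrite sum_ffun ffunE.
under eq_bigr => p _ do rewrite !ffunE -surjective_pairing.
case: (boolP (q.1 <= q.2)%O) => hq.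
  rewrite (bigD1 q) //= eqxx mulr1 big1 ?addr0 // => p /andP[_ pq].
  by rewrite eq_sym (negPf pq) mulr0.
rewrite big1; first by case: q hq => x y /= hq; rewrite ha.
move=> p hp; case: eqP => [eq|]; last by rewrite mulr0.
by subst; rewrite hp in hq.
Qed.

Lemma JUb (x y : X) (b : V) : (x <= y)%O -> incid b -> J (U x y) b.
Proof.
move=> xy hb; rewrite (decomp hb).
pose P (w : V) := incid w /\ J (U x y) w.
suff : P (\sum_(p | (p.1 <= p.2)%O) iscale (b p) (U p.1 p.2)) by case.
apply: big_rec; first by split; [exact: incid0 | exact: J0r].
move=> p w hp [iw Jw]; split.
  by apply: incidD => //; apply: incidZ; apply: iU.
apply: J_sym; apply: J_add => //; [by apply: incidZ; apply: iU | exact: iU | |exact: J_sym].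
by apply: J_scale; [exact: iU | exact: iU | apply: J_sym; apply: JU].
Qed.

Lemma Jall (a b : V) : incid a -> incid b -> J a b.
Proof.
move=> ha hb; rewrite (decomp ha).
pose P (w : V) := incid w /\ J w b.
suff : P (\sum_(p | (p.1 <= p.2)%O) iscale (a p) (U p.1 p.2)) by case.
apply: big_rec; first by split; [exact: incid0 | apply: J_sym; exact: J0r].
move=> p w hp [iw Jw]; split.
  by apply: incidD => //; apply: incidZ; apply: iU.
apply: J_add => //; [by apply: incidZ; apply: iU |].
by apply: J_scale; [exact: iU | done | apply: JUb].
Qed.

End PhiPart.

Unset Implicit Arguments. Set Strict Implicit.

Theorem corollary3p2 (d : Order.disp_t) (X : finPOrderType d) (F : fieldType)
  (charF2 : 2%N \in [pchar F])
  (Fbig : exists c : F, c != 0 /\ c != 1)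
  (phi : {ffun X * X -> F} -> {ffun X * X -> F})
  (phi_maps : forall a, incid a -> incid (phi a))
  (phi_lin : forall (k : F) (a b : {ffun X * X -> F}), incid a -> incid b ->
               phi (iscale k a + b) = iscale k (phi a) + phi b)
  (phi_inj : forall a b, incid a -> incid b -> phi a = phi b -> a = b)
  (phi_surj : forall b, incid b -> exists2 a, incid a & phi a = b)
  (phi_idem : forall e, iidem e -> iidem (phi e)) :
  forall a b, incid a -> incid b ->
    phi (iconv a b + iconv b a) = iconv (phi a) (phi b) + iconv (phi b) (phi a).
Proof.
move=> a b ha hb; have [c [c0 c1]] := Fbig.
exact: (Jall charF2 c0 c1 phi_lin phi_idem ha hb).
Qed.
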